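(* Let $\mathcal{A}=\mathcal{A}(R,\boldsymbol{\sigma},\boldsymbol{t})$ and $\mathcal{A}'=\mathcal{A}(R,\boldsymbol{\sigma},\boldsymbol{t}')$ be two twisted generalized Weyl algebras of rank two (with $t_1,t_2$ regular in $R$ and satisfying the consistency equation) such that $t_i'=s_it_i$ for $i=1,2$, where $s_1,s_2$ are central invertible elements of $R$ satisfying $\sigma_2^{1/2}(s_1)\,\sigma_1^{1/2}(s_2)=\sigma_2^{-1/2}(s_1)\,\sigma_1^{-1/2}(s_2)$. Then $\mathcal{A}\simeq\mathcal{A}'$ as $\mathbb{Z}^2$-graded $R$-rings.
   Context: Let $\Bbbk$ be a field, $R$ a unital $\Bbbk$-algebra, $\sigma_1^{1/2},\sigma_2^{1/2}$ commuting automorphisms of $R$ ($\sigma_i=(\sigma_i^{1/2})^2$), $t_1,t_2\in Z(R)$. The TGWC $\tilde{\mathcal{A}}(R,\boldsymbol{\sigma},\boldsymbol{t})$ is obtained from $R$ by adjoining $X_1^\pm,X_2^\pm$ with relations $X_i^\pm r=\sigma_i^{\pm1}(r)X_i^\pm$, $X_i^\pm X_i^\mp=\sigma_i^{\pm1/2}(t_i)$, $[X_1^\pm,X_2^\mp]=0$, graded by $\deg r=0$, $\deg X_i^\pm=\pm\mathbf{e}_i$. The TGWA is $\tilde{\mathcal{A}}$ modulo the sum of all graded ideals meeting the degree-zero part trivially. Consistency equation (rank two): $\sigma_2^{1/2}(t_1)\sigma_1^{1/2}(t_2)=\sigma_2^{-1/2}(t_1)\sigma_1^{-1/2}(t_2)$;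 under it $R$ is identified with the degree-zero component. *)

(* Defs.v *)
From HB Require Import structures.
From mathcomp Require Import all_boot all_order all_algebra.
From mathcomp Require Import finmap.
From mathcomp.multinomials Require Import monalg.

Set Implicit Arguments.
Unset Strict Implicit.
Unset Printing Implicit Defensive.

Import Order.TTheory GRing.Theory Num.Theory.
Local Open Scope ring_scope.

(* A letter is a pair (idx, sgn): idx = false for index 1, true for    *)
(* index 2; sgn = true for "+", false for "-".                         *)
Definition letter := (bool * bool)%type.
Definition X1p : letter := (false, true).
Definition X1m : letter := (false, false).
Definition X2p : letter := (true, true).
Definition X2m : letter := (true, false).

Definition word := seq letter.

Definition deg_letter (a : letter) : int * int :=
  let s : int := if a.2 then 1 else -1 in
  if a.1 then (0, s) else (s, 0).

Definition deg_word (w : word) : int * int :=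
  foldr (fun a d => ((deg_letter a).1 + d.1, (deg_letter a).2 + d.2)) (0, 0) w.

Section SkewFree.
Variables (k : fieldType) (R : algType k).
(* sh1 = sigma_1^{1/2}, sh1i = its inverse, same for index 2 *)
Variables (sh1 sh1i sh2 sh2i : R -> R).

(* X_a r = letter_aut a (r) X_a *)
Definition letter_aut (a : letter) : R -> R :=
  match a with
  | (false, true)  => sh1 \o sh1
  | (false, false) => sh1i \o sh1i
  | (true, true)   => sh2 \o sh2
  | (true, false)  => sh2i \o sh2i
  end.

Definition word_aut (u : word) : R -> R :=
  foldr (fun a g => letter_aut a \o g) id u.

(* The skew free ring F = R<X_1^+, X_1^-, X_2^+, X_2^-> with relations
   X_a r = sigma_a(r) X_a : elements are finite R-combinations r * X_w of
   words w (coefficients written on the left). *)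
Definition F := {malg R[word]}.

Definition mulF (x y : F) : F :=
  \sum_(u <- msupp x) \sum_(v <- msupp y)
     << x@_u * word_aut u (y@_v) *g (u ++ v) >>.

Definition cF (r : R) : F := << r *g [::] >>.
Definition XF (a : letter) : F := << 1 *g [:: a] >>.
Definition oneF : F := cF 1.

Definition compF (d : int * int) (x : F) : F :=
  \sum_(w <- msupp x | deg_word w == d) << x@_w *g w >>.

Definition homogF (d : int * int) (x : F) : Prop :=
  forall w, w \in msupp x -> deg_word w = d.

Definition is_idealF (J : F -> Prop) : Prop :=
  [/\ J 0, (forall x y, J x -> J y -> J (x + y)), (forall x, J x -> J (- x)),
      (forall a x, J x -> J (mulF a x)) & (forall a x, J x -> J (mulF x a))].

Inductive idealF_gen (S : F -> Prop) : F -> Prop :=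
  | igen_in x : S x -> idealF_gen S x
  | igen_0 : idealF_gen S 0
  | igen_add x y : idealF_gen S x -> idealF_gen S y -> idealF_gen S (x + y)
  | igen_opp x : idealF_gen S x -> idealF_gen S (- x)
  | igen_lmul a x : idealF_gen S x -> idealF_gen S (mulF a x)
  | igen_rmul a x : idealF_gen S x -> idealF_gen S (mulF x a).

Variables (t1 t2 : R).

(* defining relations of the TGWC (besides X r = sigma(r) X, built into F) *)
Definition tgwc_rels (z : F) : Prop :=
     z = mulF (XF X1p) (XF X1m) - cF (sh1 t1)
  \/ z = mulF (XF X1m) (XF X1p) - cF (sh1i t1)
  \/ z = mulF (XF X2p) (XF X2m) - cF (sh2 t2)
  \/ z = mulF (XF X2m) (XF X2p) - cF (sh2i t2)
  \/ z = mulF (XF X1p) (XF X2m) - mulF (XF X2m) (XF X1p)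
  \/ z = mulF (XF X1m) (XF X2p) - mulF (XF X2p) (XF X1m).

(* kernel of F ->> TGWC *)
Definition tgwc_ker : F -> Prop := idealF_gen tgwc_rels.

(* J is (the preimage in F of) a graded ideal of the TGWC meeting its
   degree-zero component trivially *)
Definition good_idealF (J : F -> Prop) : Prop :=
  [/\ is_idealF J, (forall x, tgwc_ker x -> J x),
      (forall d x, J x -> J (compF d x)) &
      (forall y, homogF (0, 0) y -> J y -> tgwc_ker y)].

(* kernel of F ->> TGWA : (preimage of) the sum of all such graded ideals *)
Definition tgwa_ker : F -> Prop :=
  idealF_gen (fun y => exists J, good_idealF J /\ J y).

End SkewFree.

(* An isomorphism of Z^2-graded R-rings between the quotients F/K and F/K'
   (K, K' two-sided ideals of F), described on representatives:
   f : F -> F induces a well-defined map F/K -> F/K' which is bijective,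
   additive, multiplicative, restricts to the identity on (the image of) R,
   and maps the degree-d component into the degree-d component. *)
Definition graded_Rring_iso (k : fieldType) (R : algType k)
    (sh1 sh1i sh2 sh2i : R -> R) (K K' : F R -> Prop) (f : F R -> F R) : Prop :=
  let mul := mulF sh1 sh1i sh2 sh2i in
     (forall x y, K (x - y) -> K' (f x - f y))
  /\ (forall x y, K' (f x - f y) -> K (x - y))
  /\ (forall y, exists x, K' (f x - y))
  /\ (forall x y, K' (f (x + y) - (f x + f y)))
  /\ (forall x y, K' (f (mul x y) - mul (f x) (f y)))
  /\ (forall r, K' (f (cF r) - cF r))
  /\ (forall d x, homogF d x -> exists y, homogF d y /\ K' (f x - y)).

(* Main.v *)
Require Import Defs.
From HB Require Import structures.
From mathcomp Require Import all_boot all_order all_algebra.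
From mathcomp Require Import finmap.
From mathcomp.multinomials Require Import monalg.
Set Implicit Arguments.
Unset Strict Implicit.
Unset Printing Implicit Defensive.
Import GRing.Theory.
Local Open Scope ring_scope.

Section Gen.
Variables (k : fieldType) (R : algType k).

Definition raut (f : R -> R) :=
  [/\ {morph f : x y / x + y}, {morph f : x y / x * y}, f 1 = 1 &
      exists g, cancel g f].

Definition central (z : R) := forall r, z * r = r * z.

Lemma raut0 f : raut f -> f 0 = 0.
Proof.
case=> fD _ _ _; apply: (@addrI _ (f 0)); by rewrite -fD !addr0.
Qed.

Lemma raut_central f z : raut f -> central z -> central (f z).
Proof.
case=> _ fM _ [g gK] cz r; by rewrite -(gK r) -!fM cz.
Qed.

Lemma raut_comp f g : raut f -> raut g -> raut (f \o g).
Proof.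
case=> fD fM f1 [f' f'K] [gD gM g1 [g' g'K]]; split => /=.
- by move=> x y /=; rewrite gD fD.
- by move=> x y /=; rewrite gM fM.
- by rewrite g1 f1.
- by exists (g' \o f') => x /=; rewrite g'K f'K.
Qed.

Lemma raut_id : raut id.
Proof. by split => //; exists id. Qed.

Lemma raut_inv f g : raut f -> cancel f g -> cancel g f -> raut g.
Proof.
case=> fD fM f1 _ fK gK; split.
- by move=> x y; apply: (can_inj fK); rewrite fD !gK.
- by move=> x y; apply: (can_inj fK); rewrite fM !gK.
- by apply: (can_inj fK); rewrite f1 gK.
- by exists f.
Qed.

Definition scaleF (h : word -> R) (x : F R) : F R :=
  \sum_(w <- msupp x) << x@_w * h w *g w >>.

Lemma coef_sum_supp (x : F R) (f : word -> R) m :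
  (forall w, w \notin msupp x -> f w = 0) ->
  (\sum_(w <- msupp x) << f w *g w >>)@_m = f m.
Proof.
move=> f0; rewrite raddf_sum /=.
have [mx|mx] := boolP (m \in msupp x).
  rewrite (big_fsetD1 m) //= mcoeffUU big1_fset ?addr0 // => w.

  by rewrite in_fsetD1 mcoeffU; case: eqP => // -> /andP[/eqP].
rewrite big1_fset ?f0 // => w wx _; rewrite mcoeffU; case: eqP => // ew.
by rewrite -ew wx in mx.
Qed.

Lemma scaleFE h x m : (scaleF h x)@_m = x@_m * h m.
Proof. by rewrite coef_sum_supp // => w /mcoeff_outdom ->; rewrite mul0r. Qed.

Lemma scaleFD h : {morph scaleF h : x y / x + y}.
Proof. by move=> x y; apply/malgP => m; rewrite mcoeffD !scaleFE mcoeffD mulrDl. Qed.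

Lemma scaleF0 h : scaleF h 0 = 0.
Proof. by apply/malgP => m; rewrite scaleFE !mcoeff0 mul0r. Qed.

Lemma scaleFN h : {morph scaleF h : x / - x}.
Proof. by move=> x; apply/malgP => m; rewrite mcoeffN !scaleFE mcoeffN mulNr. Qed.

Lemma scaleFB h : {morph scaleF h : x y / x - y}.
Proof. by move=> x y; rewrite scaleFD scaleFN. Qed.

Lemma scaleFU h c w : scaleF h << c *g w >> = << c * h w *g w >>.
Proof.
apply/malgP => m; rewrite scaleFE !mcoeffU; case: eqP => [->|] //=.
by rewrite mul0r.
Qed.

Lemma scaleF_sum h (I : Type) (s : seq I) (P : pred I) (G : I -> F R) :
  scaleF h (\sum_(i <- s | P i) G i) = \sum_(i <- s | P i) scaleF h (G i).
Proof. by apply: (big_morph _ (scaleFD h) (scaleF0 h)). Qed.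

Lemma msupp_scaleF h x : (msupp (scaleF h x) `<=` msupp x)%fset.
Proof.
apply/fsubsetP => m; rewrite -!mcoeff_neq0 scaleFE.
by apply: contra => /eqP ->; rewrite mul0r.
Qed.

Lemma scaleFK h h' x : (forall w, h w * h' w = 1) -> scaleF h' (scaleF h x) = x.
Proof. by move=> hh; apply/malgP => m; rewrite !scaleFE -mulrA hh mulr1. Qed.

Lemma compFE d (x : F R) m : (compF d x)@_m = if deg_word m == d then x@_m else 0.
Proof.
rewrite /compF big_mkcond /=.
rewrite (eq_bigr (fun w => << (if deg_word w == d then x@_w else 0) *g w >>)).
  by rewrite coef_sum_supp // => w /mcoeff_outdom ->; case: ifP.
by move=> w _; case: ifP => //; rewrite monalgU0.
Qed.

Lemma scaleF_comp h d (x : F R) : scaleF h (compF d x) = compF d (scaleF h x).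
Proof.
apply/malgP => m; rewrite scaleFE !compFE scaleFE; case: ifP => //.
by rewrite mul0r.
Qed.

Lemma homog_scaleF h d (x : F R) : homogF d x -> homogF d (scaleF h x).
Proof. by move=> hx w /(fsubsetP (msupp_scaleF h x)) /hx. Qed.


Lemma central1 : central 1.
Proof. by move=> r; rewrite mul1r mulr1. Qed.

Lemma centralM a b : central a -> central b -> central (a * b).
Proof. by move=> ca cb r; rewrite -mulrA cb mulrA ca mulrA. Qed.

Variables (sh1 sh2 : {lrmorphism R -> R}) (sh1i sh2i : R -> R).
Hypotheses (Hsh1K : cancel sh1 sh1i) (Hsh1iK : cancel sh1i sh1)
  (Hsh2K : cancel sh2 sh2i) (Hsh2iK : cancel sh2i sh2)
  (Hcomm : forall r, sh1 (sh2 r) = sh2 (sh1 r)).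

Local Notation mul := (mulF sh1 sh1i sh2 sh2i).
Local Notation wa := (word_aut sh1 sh1i sh2 sh2i).
Local Notation la := (letter_aut sh1 sh1i sh2 sh2i).

Lemma raut_sh (f : {lrmorphism R -> R}) g : cancel g f -> raut f.
Proof. move=> gK; split; [exact: rmorphD|exact: rmorphM|exact: rmorph1|by exists g]. Qed.

Lemma raut_sh1 : raut sh1. Proof. exact: raut_sh Hsh1iK. Qed.
Lemma raut_sh2 : raut sh2. Proof. exact: raut_sh Hsh2iK. Qed.
Lemma raut_sh1i : raut sh1i. Proof. exact: raut_inv raut_sh1 Hsh1K Hsh1iK. Qed.
Lemma raut_sh2i : raut sh2i. Proof. exact: raut_inv raut_sh2 Hsh2K Hsh2iK. Qed.

Lemma raut_la a : raut (la a).
Proof.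
case: a => [[] []] /=; apply: raut_comp;
  by [exact: raut_sh1|exact: raut_sh2|exact: raut_sh1i|exact: raut_sh2i].
Qed.

Lemma raut_wa u : raut (wa u).
Proof.
elim: u => [|a u IH] /=; first exact: raut_id.
exact: raut_comp (raut_la a) IH.
Qed.

Lemma mulFw (d1 d2 : {fset word}) (x y : F R) :
  (msupp x `<=` d1)%fset -> (msupp y `<=` d2)%fset ->
  mul x y = \sum_(u <- d1) \sum_(v <- d2) << x@_u * wa u (y@_v) *g (u ++ v) >>.
Proof.
move=> le_d1 le_d2; rewrite /mulF (big_fset_incl _ le_d1) /=.
  apply/eq_bigr=> u _; apply/big_fset_incl => // v _ /mcoeff_outdom ->.
  by rewrite (raut0 (raut_wa u)) mulr0 monalgU0.
move=> u _ /mcoeff_outdom xu.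
by rewrite big1 => // v _; rewrite xu mul0r monalgU0.
Qed.

Lemma scaleF_mul h (hcat : forall u v, h (u ++ v) = h u * wa u (h v))
  (hc : forall w, central (h w)) x y :
  scaleF h (mul x y) = mul (scaleF h x) (scaleF h y).
Proof.
rewrite [RHS](mulFw (msupp_scaleF h x) (msupp_scaleF h y)) /mulF scaleF_sum.
apply: eq_bigr => u _; rewrite scaleF_sum; apply: eq_bigr => v _.
rewrite scaleFU !scaleFE hcat; have [_ M _ _] := raut_wa u; rewrite M.
congr << _ *g _ >>.
by rewrite !mulrA -(mulrA (x@_u) (wa u (y@_v))) -hc !mulrA.
Qed.

Fixpoint hgen (c : letter -> R) (w : word) : R :=
  if w is a :: w' then c a * la a (hgen c w') else 1.

Lemma hgen_cat c u v : hgen c (u ++ v) = hgen c u * wa u (hgen c v).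
Proof.
elim: u => [|a u IH] /=; first by rewrite mul1r.
by rewrite IH; have [_ M _ _] := raut_la a; rewrite M mulrA.
Qed.

Lemma hgen_central c : (forall a, central (c a)) -> forall w, central (hgen c w).
Proof.
move=> cc; elim => [|a w IH] /=; first exact: central1.
exact: centralM (cc a) (raut_central (raut_la a) IH).
Qed.

Lemma hgen_inv c c' : (forall a, central (c a)) -> (forall a, c a * c' a = 1) ->
  forall w, hgen c w * hgen c' w = 1.
Proof.
move=> cc cc'; elim => [|a w IH] /=; first by rewrite mulr1.
have ch := raut_central (raut_la a) (hgen_central cc w).
have [_ M U _] := raut_la a.
by rewrite -mulrA (mulrA (la a _)) ch -!mulrA -M IH U mulr1 cc'.
Qed.


Lemma ideal_map h (hcat : forall u v, h (u ++ v) = h u * wa u (h v))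
  (hc : forall w, central (h w)) (S S' : F R -> Prop) :
  (forall z, S z -> idealF_gen sh1 sh1i sh2 sh2i S' (scaleF h z)) ->
  forall z, idealF_gen sh1 sh1i sh2 sh2i S z ->
            idealF_gen sh1 sh1i sh2 sh2i S' (scaleF h z).
Proof.
move=> HS z; elim => {z} [x /HS //|||||].
- by rewrite scaleF0; apply: igen_0.
- by move=> x y _ Hx _ Hy; rewrite scaleFD; apply: igen_add.
- by move=> x _ Hx; rewrite scaleFN; apply: igen_opp.
- by move=> a x _ Hx; rewrite scaleF_mul //; apply: igen_lmul.
- by move=> a x _ Hx; rewrite scaleF_mul //; apply: igen_rmul.
Qed.

Lemma mulFXX a b : mul (XF R a) (XF R b) = << 1 *g [:: a; b] >>.
Proof.
rewrite (mulFw msuppU_le msuppU_le) !big_seq_fset1 !mcoeffUU.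
by have [_ _ -> _] := raut_wa [:: a]; rewrite mulr1.
Qed.

Lemma mulFcF v (z : F R) m : (mul (cF v) z)@_m = v * z@_m.
Proof.
rewrite (mulFw msuppU_le (fsubset_refl _)) !big_seq_fset1 mcoeffUU /=.
by rewrite coef_sum_supp // => w /mcoeff_outdom ->; rewrite mulr0.
Qed.

Lemma rel_form h v w1 w2 r r' : h w1 = v -> r * h w2 = v * r' ->
  scaleF h (<< 1 *g w1 >> - << r *g w2 >>) =
  mul (cF v) (<< 1 *g w1 >> - << r' *g w2 >>).
Proof.
move=> E1 E2; apply/malgP => m; rewrite mulFcF scaleFE !mcoeffB !mcoeffU.
rewrite mulrBl mulrBr.
case: eqP => e1; case: eqP => e2 /=; subst; rewrite ?mulr1n ?mulr0n;
  by rewrite ?E1 ?E2 ?mul1r ?mulr1 ?mulr0 ?mul0r.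
Qed.

Definition cc (a1 a2 : R) (l : letter) : R :=
  match l with
  | (false, true) => 1 | (false, false) => sh1i a1
  | (true, true) => sh2 a2 | (true, false) => 1 end.

Lemma cc_central a1 a2 : central a1 -> central a2 -> forall l, central (cc a1 a2 l).
Proof.
move=> c1 c2 [[] []] /=; try exact: central1.
  exact: raut_central raut_sh2 c2.
exact: raut_central raut_sh1i c1.
Qed.

Lemma hgen2 c a b : hgen c [:: a; b] = c a * la a (c b).
Proof. by rewrite /=; have [_ _ -> _] := raut_la b; rewrite mulr1. Qed.

Lemma gen_map t1 t2 a1 a2 b1 b2 (e1 : a1 * b1 = 1) (e2 : a2 * b2 = 1)
  (Hu : sh1i a1 * sh1i (sh1i (sh2 a2)) = sh2 a2 * sh2 (sh2 (sh1i a1))) z :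
  tgwc_rels sh1 sh1i sh2 sh2i t1 t2 z ->
  tgwc_ker sh1 sh1i sh2 sh2i (b1 * t1) (b2 * t2) (scaleF (hgen (cc a1 a2)) z).
Proof.
have [_ M1i U1i _] := raut_sh1i; have [_ M2i U2i _] := raut_sh2i.
have U1 : sh1 1 = 1 by exact: rmorph1.
have U2 : sh2 1 = 1 by exact: rmorph1.
rewrite /tgwc_ker /tgwc_rels /cF.
move=> [->|[->|[->|[->|[->|->]]]]]; rewrite !mulFXX.
- rewrite (@rel_form _ (sh1 a1) _ _ _ (sh1 (b1 * t1))).
  + by apply: igen_lmul; apply: igen_in; left.
  + by rewrite hgen2 /= mul1r Hsh1iK.
  + by rewrite /= mulr1 rmorphM mulrA -rmorphM e1 rmorph1 mul1r.
- rewrite (@rel_form _ (sh1i a1) _ _ _ (sh1i (b1 * t1))).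
  + by apply: igen_lmul; apply: igen_in; right; left.
  + by rewrite hgen2 /= U1i U1i mulr1.
  + by rewrite /= mulr1 M1i mulrA -M1i e1 U1i mul1r.
- rewrite (@rel_form _ (sh2 a2) _ _ _ (sh2 (b2 * t2))).
  + by apply: igen_lmul; apply: igen_in; right; right; left.
  + by rewrite hgen2 /= U2 U2 mulr1.
  + by rewrite /= mulr1 rmorphM mulrA -rmorphM e2 rmorph1 mul1r.
- rewrite (@rel_form _ (sh2i a2) _ _ _ (sh2i (b2 * t2))).
  + by apply: igen_lmul; apply: igen_in; right; right; right; left.
  + by rewrite hgen2 /= mul1r Hsh2K.
  + by rewrite /= mulr1 M2i mulrA -M2i e2 U2i mul1r.
- rewrite (@rel_form _ 1 _ _ _ 1).
  + by apply: igen_lmul; apply: igen_in; right; right; right; right; left.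
  + by rewrite hgen2 /= U1 U1 mulr1.
  + by rewrite hgen2 /= U2i U2i !mulr1.
- rewrite (@rel_form _ (sh1i a1 * sh1i (sh1i (sh2 a2))) _ _ _ 1).
  + by apply: igen_lmul; apply: igen_in; right; right; right; right; right.
  + by rewrite hgen2.
  + by rewrite hgen2 /= mul1r mulr1 Hu.
Qed.


Lemma tgwa_map h h' t1 t2 t1' t2'
  (hcat : forall u v, h (u ++ v) = h u * wa u (h v))
  (hc : forall w, central (h w))
  (hcat' : forall u v, h' (u ++ v) = h' u * wa u (h' v))
  (hc' : forall w, central (h' w))
  (hh' : forall w, h w * h' w = 1) (h'h : forall w, h' w * h w = 1)
  (G : forall z, tgwc_rels sh1 sh1i sh2 sh2i t1 t2 z ->
         tgwc_ker sh1 sh1i sh2 sh2i t1' t2' (scaleF h z))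
  (G' : forall z, tgwc_rels sh1 sh1i sh2 sh2i t1' t2' z ->
         tgwc_ker sh1 sh1i sh2 sh2i t1 t2 (scaleF h' z)) :
  forall z, tgwa_ker sh1 sh1i sh2 sh2i t1 t2 z ->
            tgwa_ker sh1 sh1i sh2 sh2i t1' t2' (scaleF h z).
Proof.
have K1 := ideal_map hcat hc G; have K2 := ideal_map hcat' hc' G'.
apply: ideal_map => // y [J [[[J0 JD JN JL JR] Jk Jc Jh] Jy]].
apply: igen_in; exists (fun z => J (scaleF h' z)); split; last by rewrite scaleFK.
split; [split| | |].
- by rewrite scaleF0.
- by move=> x y0; rewrite scaleFD; apply: JD.
- by move=> x; rewrite scaleFN; apply: JN.
- by move=> a x; rewrite scaleF_mul //; apply: JL.
- by move=> a x; rewrite scaleF_mul //; apply: JR.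
- by move=> x /K2; apply: Jk.
- by move=> d x; rewrite scaleF_comp; apply: Jc.
- move=> y0 hy Jy0; have := Jh _ (homog_scaleF (h:=h') hy) Jy0.
  by move/K1; rewrite scaleFK.
Qed.

Lemma C1 x : sh1i (sh2 x) = sh2 (sh1i x).
Proof. by apply: (can_inj Hsh1K); rewrite Hsh1iK Hcomm Hsh1iK. Qed.

Lemma Hu_of (s1 s2 : R) (cs2 : central s2) :
  sh2 s1 * sh1 s2 = sh2i s1 * sh1i s2 ->
  sh1i s1 * sh1i (sh1i (sh2 s2)) = sh2 s2 * sh2 (sh2 (sh1i s1)).
Proof.
have [_ M1i _ _] := raut_sh1i.
have [_ M2 _ _] := raut_sh2.
move/(congr1 (fun x => sh2 (sh1i x))) => /=; rewrite !M1i !M2.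
have -> : sh2 (sh1i (sh2 s1)) = sh2 (sh2 (sh1i s1)) by rewrite C1.
rewrite Hsh1K.
have -> : sh2 (sh1i (sh2i s1)) = sh1i s1 by rewrite -C1 Hsh2iK.
have -> : sh2 (sh1i (sh1i s2)) = sh1i (sh1i (sh2 s2)) by rewrite -!C1.
move=> <-; by rewrite (raut_central raut_sh2 cs2).
Qed.

Lemma inv_eq (A B C D A' B' C' D' : R) :
  central A -> central B -> central C -> central D ->
  central A' -> central B' -> central C' -> central D' ->
  A * A' = 1 -> B * B' = 1 -> C * C' = 1 -> D * D' = 1 ->
  A' * B' = C' * D' -> A * B = C * D.
Proof.
move=> cA cB cC cD cA' cB' cC' cD' eA eB eC eD E.
have h1 : C' * D' * (C * D) = 1.
  by rewrite -mulrA cD' -mulrA eD mulr1 -cC eC.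
have h2 : A * B * (A' * B') = 1.
  by rewrite -mulrA cB -mulrA cB' eB mulr1 eA.
by rewrite -[A * B]mulr1 -h1 mulrA -E h2 mul1r.
Qed.

Lemma raut_inv1 f a b : raut f -> a * b = 1 -> f a * f b = 1.
Proof. by case=> _ M U _ e; rewrite -M e U. Qed.

End Gen.

Theorem mainTheorem10 (k : fieldType) (R : algType k)
  (sh1 sh2 : {lrmorphism R -> R}) (sh1i sh2i : R -> R)
  (Hsh1K : cancel sh1 sh1i) (Hsh1iK : cancel sh1i sh1)
  (Hsh2K : cancel sh2 sh2i) (Hsh2iK : cancel sh2i sh2)
  (Hcomm : forall r, sh1 (sh2 r) = sh2 (sh1 r))
  (t1 t2 : R)
  (Ht1c : forall r, t1 * r = r * t1) (Ht2c : forall r, t2 * r = r * t2)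
  (Ht1reg : GRing.lreg t1 /\ GRing.rreg t1)
  (Ht2reg : GRing.lreg t2 /\ GRing.rreg t2)
  (Hcons : sh2 t1 * sh1 t2 = sh2i t1 * sh1i t2)
  (s1 s2 : R)
  (Hs1c : forall r, s1 * r = r * s1) (Hs2c : forall r, s2 * r = r * s2)
  (Hs1u : exists u, s1 * u = 1 /\ u * s1 = 1)
  (Hs2u : exists u, s2 * u = 1 /\ u * s2 = 1)
  (Hs : sh2 s1 * sh1 s2 = sh2i s1 * sh1i s2) :
  exists f : F R -> F R,
    graded_Rring_iso sh1 sh1i sh2 sh2i
      (tgwa_ker sh1 sh1i sh2 sh2i t1 t2)
      (tgwa_ker sh1 sh1i sh2 sh2i (s1 * t1) (s2 * t2)) f.
Proof.
case: Hs1u => u1 [su1 us1]; case: Hs2u => u2 [su2 us2].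
have cinv (s u : R) : central s -> s * u = 1 -> u * s = 1 -> central u.
  move=> cs e e' r.
  by rewrite -[u * r]mulr1 -e mulrA -(mulrA u) -cs mulrA e' mul1r.
have cu1 := cinv _ _ Hs1c su1 us1; have cu2 := cinv _ _ Hs2c su2 us2.
have cs1 : central s1 by []. have cs2 : central s2 by [].
pose c := cc sh2 sh1i u1 u2; pose c' := cc sh2 sh1i s1 s2.
have Rs1i := raut_sh1i Hsh1K Hsh1iK; have Rs2 := raut_sh2 Hsh2iK.
have ccc : forall a, c a * c' a = 1.
  case=> [[] []] /=; rewrite ?mulr1 //; exact: raut_inv1.
have ccc' : forall a, c' a * c a = 1.
  case=> [[] []] /=; rewrite ?mulr1 //; exact: raut_inv1.
have cc1 : forall a, central (c a) := cc_central Hsh1K Hsh1iK Hsh2iK cu1 cu2.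
have cc2 : forall a, central (c' a) := cc_central Hsh1K Hsh1iK Hsh2iK cs1 cs2.
pose h := hgen sh1 sh2 sh1i sh2i c; pose h' := hgen sh1 sh2 sh1i sh2i c'.
have hh' : forall w, h w * h' w = 1.
  exact: (hgen_inv Hsh1K Hsh1iK Hsh2K Hsh2iK cc1 ccc).
have h'h : forall w, h' w * h w = 1.
  exact: (hgen_inv Hsh1K Hsh1iK Hsh2K Hsh2iK cc2 ccc').
have hc := hgen_central Hsh1K Hsh1iK Hsh2K Hsh2iK cc1.
have hc' := hgen_central Hsh1K Hsh1iK Hsh2K Hsh2iK cc2.
have hcat := hgen_cat Hsh1K Hsh1iK Hsh2K Hsh2iK c.
have hcat' := hgen_cat Hsh1K Hsh1iK Hsh2K Hsh2iK c'.
have Hus := Hu_of Hsh1K Hsh1iK Hsh2iK Hcomm cs2 Hs.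
have Huu : sh1i u1 * sh1i (sh1i (sh2 u2)) = sh2 u2 * sh2 (sh2 (sh1i u1)).
  have RB := raut_comp Rs1i (raut_comp Rs1i Rs2).
  have RD := raut_comp Rs2 (raut_comp Rs2 Rs1i).
  apply: (inv_eq _ _ _ _ _ _ _ _ _ _ _ _ Hus).
  - exact: (raut_central Rs1i cu1).
  - exact: (raut_central RB cu2).
  - exact: (raut_central Rs2 cu2).
  - exact: (raut_central RD cu1).
  - exact: (raut_central Rs1i cs1).
  - exact: (raut_central RB cs2).
  - exact: (raut_central Rs2 cs2).
  - exact: (raut_central RD cs1).
  - exact: (raut_inv1 Rs1i us1).
  - exact: (raut_inv1 RB us2).
  - exact: (raut_inv1 Rs2 us2).
  - exact: (raut_inv1 RD us1).
have G : forall z, tgwc_rels sh1 sh1i sh2 sh2i t1 t2 z ->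
    tgwc_ker sh1 sh1i sh2 sh2i (s1 * t1) (s2 * t2) (scaleF h z).
  move=> z; exact: (gen_map Hsh1K Hsh1iK Hsh2K Hsh2iK us1 us2 Huu).
have G' : forall z, tgwc_rels sh1 sh1i sh2 sh2i (s1 * t1) (s2 * t2) z ->
    tgwc_ker sh1 sh1i sh2 sh2i t1 t2 (scaleF h' z).
  move=> z /(gen_map Hsh1K Hsh1iK Hsh2K Hsh2iK su1 su2 Hus).
  by rewrite !mulrA us1 us2 !mul1r.
have T := tgwa_map Hsh1K Hsh1iK Hsh2K Hsh2iK hcat hc hcat' hc' hh' h'h G G'.
have T' := tgwa_map Hsh1K Hsh1iK Hsh2K Hsh2iK hcat' hc' hcat hc h'h hh' G' G.
exists (scaleF h); rewrite /graded_Rring_iso /=.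
split; [|split; [|split; [|split; [|split; [|split]]]]].
- by move=> x y /T; rewrite scaleFB.
- by move=> x y; rewrite -scaleFB => /T'; rewrite scaleFK.
- move=> y; exists (scaleF h' y); rewrite scaleFK // subrr; exact: igen_0.
- by move=> x y; rewrite scaleFD subrr; apply: igen_0.
- move=> x y; rewrite (scaleF_mul Hsh1K Hsh1iK Hsh2K Hsh2iK) // subrr; exact: igen_0.
- move=> r; rewrite /cF scaleFU /= mulr1 subrr; exact: igen_0.
- move=> d x hx; exists (scaleF h x); split; first exact: homog_scaleF.
  rewrite subrr; exact: igen_0.
Qed.
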